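(* Let $\Gamma$ be a finite connected $m$-regular graph and let $u$ be an eigenvector of (the adjacency matrix of) $\Gamma$ which takes exactly three distinct values $a_0,a_1,a_2$. For $i\in\{0,1,2\}$ let $C^i$ be the set of vertices $x$ with $u_x=a_i$. Suppose that there are no edges between $C^0$ and $C^2$, and that there is a number $\beta_1$ such that every vertex of $C^1$ is adjacent to exactly $\beta_1$ vertices of $C^2$. Then for all $i,j\in\{0,1,2\}$ the number of neighbours in $C^j$ of a vertex $x\in C^i$ does not depend on the choice of $x\in C^i$; consequently $C^0$ is a completely regular code in $\Gamma$, with distance partition $(C^0,C^1,C^2)$ and covering radius $2$.
   Context: For a nonempty vertex set $C$ of a connected regular graph, $C_i$ denotes the set of vertices at distance exactly $i$ from $C$, and the covering radius $\rho$ is the largest $i$ with $C_i\neq\emptyset$; $(C_0=C,C_1,\dots,C_\rho)$ is the distance partition. $C$ is a completely regular code if there are numbers $\gamma_i,\alpha_i,\beta_i$ such that every vertex of $C_i$ has exactly $\gamma_i$ neighbours in $C_{i-1}$, $\alpha_i$ neighbours in $C_i$ and $\beta_i$ neighbours in $C_{i+1}$, for all $i$. *)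

(* Defs.v *)
From mathcomp Require Import all_boot all_order all_algebra.
Set Implicit Arguments. Unset Strict Implicit. Unset Printing Implicit Defensive.
Import Order.TTheory GRing.Theory Num.Theory.

(* A finite simple graph: vertex type T : finType, adjacency e : rel T,
   assumed symmetric and irreflexive in the theorem. *)

Section Graphs.
Variable T : finType.
Variable e : rel T.

Definition nbrs_in (x : T) (S : {set T}) : {set T} := [set y in S | e x y].

Definition regular (m : nat) : Prop := forall x : T, #|[set y | e x y]| = m.

Definition connected_graph : Prop := forall x y : T, connect e x y.

Definition adj_eigenvector (R : nzRingType) (u : T -> R) : Prop :=
  (exists x, u x != 0%R) /\
  exists theta : R, forall x, (\sum_(y | e x y) u y)%R = (theta * u x)%R.

(* ball C k = vertices at distance <= k from C *)
Definition ball (C : {set T}) (k : nat) : {set T} :=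
  iter k (fun S => S :|: [set y | [exists x in S, e x y]]) C.

Definition layer (C : {set T}) (i : nat) : {set T} :=
  if i is i'.+1 then ball C i :\: ball C i' else C.

(* C_{i-1}, with C_{-1} empty *)
Definition prev_layer (C : {set T}) (i : nat) : {set T} :=
  if i is i'.+1 then layer C i' else set0.

Definition covering_radius_is (C : {set T}) (rho : nat) : Prop :=
  layer C rho != set0 /\ forall i, rho < i -> layer C i = set0.

Definition completely_regular (C : {set T}) : Prop :=
  C != set0 /\
  exists rho, covering_radius_is C rho /\
  exists gamma alpha beta : nat -> nat,
    forall i x, i <= rho -> x \in layer C i ->
      [/\ #|nbrs_in x (prev_layer C i)| = gamma i,
          #|nbrs_in x (layer C i)| = alpha i &
          #|nbrs_in x (layer C i.+1)| = beta i].

End Graphs.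

(* Main.v *)
Require Import Defs.
From mathcomp Require Import all_boot all_order all_algebra ring.
Import Order.TTheory GRing.Theory Num.Theory.
Local Open Scope ring_scope.

Lemma decomp (R : realFieldType) (T : finType) (u : T -> R) (a : 'I_3 -> R)
  (a_inj : injective a) (u_vals : forall x, exists i, u x = a i) y :
  (\sum_(j < 3) (y \in [set x | u x == a j]) = 1)%N /\
  u y = \sum_(j < 3) (y \in [set x | u x == a j])%:R * a j.
Proof.
have [k Hk] := u_vals y.
have Hj j : (y \in [set x | u x == a j]) = (j == k).
  by rewrite inE Hk (inj_eq a_inj) eq_sym.
under eq_bigr => j _ do rewrite Hj.
under [in X in _ /\ _ = X]eq_bigr => j _ do rewrite Hj.
split.
  by rewrite (bigD1 k) //= big1 ?eqxx // => j /negbTE ->.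
rewrite (bigD1 k) //= big1 ?eqxx ?mul1r ?addr0 // => j /negbTE ->.
by rewrite mul0r.
Qed.

Lemma card_nbrs_sum (T : finType) (e : rel T) (P : pred T) x :
  \sum_(y | e x y) (P y : nat) = #|[set y | e x y & P y]|.
Proof.
rewrite -sum1_card big_mkcond [RHS]big_mkcond /=.
by apply: eq_bigr => y _; rewrite inE; case: (e x y); case: (P y).
Qed.

Lemma count_split (R : realFieldType) (T : finType) (e : rel T) (u : T -> R) (a : 'I_3 -> R)
  (a_inj : injective a) (u_vals : forall x, exists i, u x = a i) x :
  \sum_(y | e x y) u y = \sum_(j < 3) (#|nbrs_in e x [set y | u y == a j]|)%:R * a j
  /\ #|[set y | e x y]| = (\sum_(j<3) #|nbrs_in e x [set y | u y == a j]|)%N.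
Proof.
split.
  under eq_bigr => y _ do rewrite (proj2 (@decomp _ _ _ _ a_inj u_vals y)).
  rewrite exchange_big /=; apply: eq_bigr => j _.
  rewrite -mulr_suml -natr_sum card_nbrs_sum /nbrs_in.
  by congr (_%:R * _); apply: eq_card => y; rewrite !inE andbC.
rewrite -sum1_card.
under eq_bigr => y _ do rewrite -(proj1 (@decomp _ _ _ _ a_inj u_vals y)).
rewrite (exchange_big_dep xpredT) //=; apply: eq_bigr => j _.
rewrite -sum1_card big_mkcond [RHS]big_mkcond /=.
apply: eq_bigr => y _; rewrite !inE; by case: (e x y); case: (_ == _).
Qed.
Lemma uniq2 (R : realFieldType) (p q : R) (n0 n1 n0' n1' : nat) : p != q ->
  (n0 + n1 = n0' + n1')%N -> n0%:R * p + n1%:R * q = n0'%:R * p + n1'%:R * q ->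
  n0 = n0' /\ n1 = n1'.
Proof.
move=> pq Hn E.
have N : n1%:R = n0'%:R + n1'%:R - n0%:R :> R.
  by rewrite -natrD -Hn natrD addrC addKr.
have : (n0%:R - n0'%:R) * (p - q) = 0 :> R.
  have -> : (n0%:R - n0'%:R) * (p - q) = (n0%:R * p + n1%:R * q) - (n0'%:R * p + n1'%:R * q) :> R.
    by rewrite N; ring.
  by rewrite E subrr.
move/eqP; rewrite mulf_eq0 !subr_eq0 eqr_nat (negbTE pq) orbF => /eqP H0.
by split => //; move: Hn; rewrite H0 => /addnI.
Qed.

Lemma closed_contra (T : finType) (e : rel T) (e_sym : symmetric e)
  (e_conn : connected_graph e) (S : {set T}) x y :
  x \in S -> y \notin S -> (forall x z, x \in S -> e x z -> z \in S) -> False.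
Proof.
move=> xS yS cl.
have hc : closed e (mem S).
  move=> v w vw; apply/idP/idP => [|wS]; first by move/cl; apply.
  by apply: (cl w v wS); rewrite e_sym.
by move: (closed_connect hc (e_conn x y)); rewrite xS (negbTE yS).
Qed.

Lemma ord3P (k : 'I_3) : k = inord 0 \/ k = inord 1 \/ k = inord 2.
Proof.
case: k => [[|[|[|k]]] Hk].
- by left; apply/val_inj; rewrite /= inordK.
- by right; left; apply/val_inj; rewrite /= inordK.
- by right; right; apply/val_inj; rewrite /= inordK.
- by [].
Qed.

Lemma ord3_neq : [/\ (inord 0 : 'I_3) != inord 1, (inord 0 : 'I_3) != inord 2 & (inord 1 : 'I_3) != inord 2].
Proof. by split; apply/negP => /eqP/(congr1 val); rewrite /= !inordK. Qed.

Lemma sum3R (R : nmodType) (F : 'I_3 -> R) :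
  \sum_(j < 3) F j = F (inord 0) + F (inord 1) + F (inord 2).
Proof.
rewrite !big_ord_recl big_ord0 addr0 addrA.
by congr (F _ + F _ + F _); apply/val_inj; rewrite /= inordK.
Qed.

Lemma sum3N (F : 'I_3 -> nat) :
  (\sum_(j < 3) F j = F (inord 0) + F (inord 1) + F (inord 2))%N.
Proof.
rewrite !big_ord_recl big_ord0 addn0 addnA.
by congr (F _ + F _ + F _)%N; apply/val_inj; rewrite /= inordK.
Qed.

Theorem theorem3p1 (R : realFieldType) (T : finType) (e : rel T) (m : nat)
  (e_sym : symmetric e) (e_irr : irreflexive e)
  (e_conn : connected_graph e) (e_reg : regular e m)
  (u : T -> R) (u_eig : adj_eigenvector e u)
  (a : 'I_3 -> R) (a_inj : injective a)
  (u_vals : forall x, exists i, u x = a i)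
  (a_attained : forall i, exists x, u x = a i) :
  let C := fun i : 'I_3 => [set x | u x == a i] in
  (forall x y, e x y -> x \in C (inord 0) -> y \notin C (inord 2)) ->
  (exists beta1 : nat, forall x, x \in C (inord 1) ->
      #|nbrs_in e x (C (inord 2))| = beta1) ->
  (forall i j : 'I_3, exists c : nat, forall x, x \in C i ->
      #|nbrs_in e x (C j)| = c) /\
  completely_regular e (C (inord 0)) /\
  (forall i : 'I_3, layer e (C (inord 0)) i = C i) /\
  covering_radius_is e (C (inord 0)) 2.
Proof.
move=> C H02 [b1 Hb1].
set i0 := (inord 0 : 'I_3) in H02 *.
set i1 := (inord 1 : 'I_3) in Hb1 *.
set i2 := (inord 2 : 'I_3) in H02 Hb1 *.
have [n01 n02 n12] : [/\ i0 != i1, i0 != i2 & i1 != i2] by exact: ord3_neq.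
have memC y k : (y \in C k) = (u y == a k) by rewrite inE.
have memb y k : y \in C k -> forall l, (y \in C l) = (k == l).
  by move=> + l; rewrite !memC => /eqP ->; rewrite (inj_eq a_inj).
have part y : [\/ y \in C i0, y \in C i1 | y \in C i2].
  have [k Hk] := u_vals y; rewrite !memC Hk.
  by case: (ord3P k) => [->|[->|->]]; rewrite eqxx ?orbT; [constructor 1|constructor 2|constructor 3].
have defC k : C k = [set y | u y == a k] by [].
clearbody C.
have E01 : (i0 == i1) = false by exact: negbTE.
have E02 : (i0 == i2) = false by exact: negbTE.
have E12 : (i1 == i2) = false by exact: negbTE.
have E10 : (i1 == i0) = false by rewrite eq_sym.
have E20 : (i2 == i0) = false by rewrite eq_sym.
have E21 : (i2 == i1) = false by rewrite eq_sym.
have [_ [th Hth]] := u_eig.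
have a01 : a i0 != a i1 by rewrite (inj_eq a_inj) E01.
have a12 : a i1 != a i2 by rewrite (inj_eq a_inj) E12.
set n := fun x j => #|nbrs_in e x (C j)|.
have F x : ((n x i0 + n x i1 + n x i2)%N = m) /\ ((n x i0)%:R * a i0 + (n x i1)%:R * a i1 + (n x i2)%:R * a i2 = th * u x).
  have [S1 S2] := @count_split _ _ e u a a_inj u_vals x.
  rewrite sum3R in S1; rewrite sum3N in S2.
  rewrite -!defC in S1 S2; by split; [rewrite -(e_reg x) S2 | rewrite -Hth S1].
have Z02 x : x \in C i0 -> n x i2 = 0%N.
  move=> xC; apply/eqP; rewrite cards_eq0; apply/eqP/setP => y.
  rewrite !inE; apply/negbTE/andP => -[yC exy].
  by move: (H02 x y exy xC); rewrite yC.
have Z20 x : x \in C i2 -> n x i0 = 0%N.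
  move=> xC; apply/eqP; rewrite cards_eq0; apply/eqP/setP => y.
  rewrite !inE; apply/negbTE/andP => -[yC exy].
  by move: (H02 y x); rewrite e_sym exy yC xC => /(_ isT isT).
have B x : x \in C i1 -> n x i2 = b1 := Hb1 x.
have ux x k : x \in C k -> u x = a k by rewrite memC => /eqP.
have Const3 i x x' : x \in C i -> x' \in C i ->
    [/\ n x i0 = n x' i0, n x i1 = n x' i1 & n x i2 = n x' i2].
  move=> xC x'C; have [F1 F2] := F x; have [F1' F2'] := F x'.
  rewrite (ux _ _ xC) in F2; rewrite (ux _ _ x'C) in F2'.
  case: (ord3P i) => [Ei|[Ei|Ei]]; rewrite -/i0 -/i1 -/i2 in Ei; subst i.
  - rewrite !Z02 // !addn0 in F1 F1' *; rewrite !Z02 // !mul0r !addr0 in F2 F2'.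
    by have [-> ->] := @uniq2 _ _ _ _ _ _ _ a01 (etrans F1 (esym F1')) (etrans F2 (esym F2')).
  - rewrite !B // in F1 F1' F2 F2' *.
    have := etrans F1 (esym F1') => /addIn H1.
    have := etrans F2 (esym F2') => /addIr H2.
    by have [-> ->] := @uniq2 _ _ _ _ _ _ _ a01 H1 H2.
  - rewrite !Z20 // !add0n in F1 F1' *; rewrite !Z20 // !mul0r !add0r in F2 F2'.
    by have [-> ->] := @uniq2 _ _ _ _ _ _ _ a12 (etrans F1 (esym F1')) (etrans F2 (esym F2')).
have Const i j x x' : x \in C i -> x' \in C i -> n x j = n x' j.
  move=> xC x'C; have [c0 c1 c2] := Const3 i x x' xC x'C.
  by case: (ord3P j) => [->|[->|->]].
have nbr x j : (0 < n x j)%N -> exists2 z, z \in C j & e x z.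
  by case/card_gt0P => z; rewrite /nbrs_in inE => /andP[] ; exists z.
have [x0 Hx0] := a_attained i0.
have [x1 Hx1] := a_attained i1.
have [x2 Hx2] := a_attained i2.
have x0C : x0 \in C i0 by rewrite memC Hx0.
have x1C : x1 \in C i1 by rewrite memC Hx1.
have x2C : x2 \in C i2 by rewrite memC Hx2.
have P1 y : y \in C i1 -> (0 < n y i0)%N.
  move=> yC; rewrite lt0n; apply/negP => /eqP Hy.
  apply: (@closed_contra _ e e_sym e_conn (C i0) x0 y x0C); first by rewrite (memb _ _ yC) E10.
  move=> x z xC exz; case: (part z) => // zC.
    have := Const _ i0 _ _ zC yC; rewrite Hy => /eqP; rewrite cards_eq0 => /eqP Hz.
    have : x \in nbrs_in e z (C i0) by rewrite /nbrs_in inE xC e_sym.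
    by rewrite Hz inE.
  by move: (H02 x z exz xC); rewrite zC.
have P2 y : y \in C i2 -> (0 < n y i1)%N.
  move=> yC; rewrite lt0n; apply/negP => /eqP Hy.
  apply: (@closed_contra _ e e_sym e_conn (C i2) y x0 yC); first by rewrite (memb _ _ x0C) E02.
  move=> x z xC exz; case: (part z) => // zC.
    have := Z20 _ xC => /eqP; rewrite cards_eq0 => /eqP Hz.
    have : z \in nbrs_in e x (C i0) by rewrite /nbrs_in inE zC exz.
    by rewrite Hz inE.
  have := Const _ i1 _ _ xC yC; rewrite Hy => /eqP; rewrite cards_eq0 => /eqP Hz.
  have : z \in nbrs_in e x (C i1) by rewrite /nbrs_in inE zC exz.
  by rewrite Hz inE.
have B1 : ball e (C i0) 1 = C i0 :|: C i1.
  apply/setP => y.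
  have -> : ball e (C i0) 1 = C i0 :|: [set y | [exists x in C i0, e x y]] by [].
  rewrite !inE; case: (part y) => yC; rewrite !(memb _ _ yC) ?eqxx ?E01 ?E02 ?E10 ?E12 ?E20 ?E21 //=.
    have [z zC eyz] := nbr _ _ (P1 _ yC).
    by apply/existsP; exists z; rewrite zC e_sym eyz.
  by apply/existsP => -[z /andP[zC ezy]]; move: (H02 _ _ ezy zC); rewrite yC.
have B2 : ball e (C i0) 2 = setT.
  apply/setP => y.
  have -> : ball e (C i0) 2 = ball e (C i0) 1 :|: [set y | [exists x in ball e (C i0) 1, e x y]] by [].
  rewrite B1 !inE; case: (part y) => yC; rewrite !(memb _ _ yC) ?eqxx ?E01 ?E02 ?E10 ?E12 ?E20 ?E21 //=.
  have [z zC eyz] := nbr _ _ (P2 _ yC).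
  by apply/existsP; exists z; rewrite !inE zC orbT e_sym eyz.
have Bk k : ball e (C i0) (k + 2) = setT.
  elim: k => [|k IH]; first exact: B2.
  rewrite addSn.
  have -> : ball e (C i0) (k + 2).+1 = ball e (C i0) (k + 2) :|: [set y | [exists x in ball e (C i0) (k + 2), e x y]] by [].
  by rewrite IH setTU.
have L0 : layer e (C i0) 0 = C i0 by [].
have L1 : layer e (C i0) 1 = C i1.
  have -> : layer e (C i0) 1 = ball e (C i0) 1 :\: C i0 by [].
  rewrite B1; apply/setP => y; rewrite !inE.
  by case: (part y) => yC; rewrite !(memb _ _ yC) ?eqxx ?E01 ?E02 ?E10 ?E12 ?E20 ?E21.
have L2 : layer e (C i0) 2 = C i2.
  have -> : layer e (C i0) 2 = ball e (C i0) 2 :\: ball e (C i0) 1 by [].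
  rewrite B1 B2; apply/setP => y; rewrite !inE.
  by case: (part y) => yC; rewrite !(memb _ _ yC) ?eqxx ?E01 ?E02 ?E10 ?E12 ?E20 ?E21.
have L3 k : layer e (C i0) k.+3 = set0.
  have -> : layer e (C i0) k.+3 = ball e (C i0) k.+3 :\: ball e (C i0) k.+2 by [].
  have := Bk k.+1; have := Bk k; rewrite !addn2 => -> ->.
  by rewrite setDv.
have Nset0 x : #|nbrs_in e x set0| = 0%N.
  apply/eqP; rewrite cards_eq0; apply/eqP/setP => y; by rewrite !inE.
have Cov : covering_radius_is e (C i0) 2.
  split; first by rewrite L2; apply/set0Pn; exists x2.
  by move=> i; case: i => [|[|[|k]]] // _; exact: L3.
split.
  move=> i j; have [xi Hxi] := a_attained i.
  exists (n xi j) => x xC; apply: (Const i); by rewrite // memC Hxi.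
split.
  split; first by apply/set0Pn; exists x0.
  exists 2; split => //.
  pose rep i := if i is 0 then x0 else if i is 1 then x1 else x2.
  exists (fun i => #|nbrs_in e (rep i) (prev_layer e (C i0) i)|).
  exists (fun i => #|nbrs_in e (rep i) (layer e (C i0) i)|).
  exists (fun i => #|nbrs_in e (rep i) (layer e (C i0) i.+1)|).
  have PL1 : prev_layer e (C i0) 1 = C i0 by [].
  have PL2 : prev_layer e (C i0) 2 = C i1 by rewrite -L1.
  have PL0 : prev_layer e (C i0) 0 = set0 by [].
  move=> i x; case: i => [|[|[|k]]] // _.
  - rewrite PL0 L0 L1 /= => xC; split; rewrite ?Nset0 //; exact: (Const i0).
  - rewrite PL1 L1 L2 /= => xC; split; exact: (Const i1).
  - rewrite PL2 L2 (L3 0) /= => xC; split; rewrite ?Nset0 //; exact: (Const i2).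
split => //.
move=> i; case: (ord3P i) => [->|[->|->]]; rewrite inordK //; first [exact: L0 | exact: L1 | exact: L2].
Qed.
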